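(* Let $1\le d<n$, $\underline i=i_1\cdots i_d\in I(d,n)$, and consider root operators $f_{s,h},f_{t,k}$ (all operators below are assumed to be defined, i.e. their indices admissible). (i) If $|h-k|>1$, or $|h-k|=1$ and $|s-t|>1$, then $f_{s,h}f_{t,k}(\underline i)=f_{t,k}f_{s,h}(\underline i)$. (ii) If $|s-t|>1$ or $s=t$, then $f_{s,h}f_{t,h}(\underline i)=0=f_{t,h}f_{s,h}(\underline i)$. (iii) $f_{s,h}f_{s+1,h}(\underline i)=0$, and $f_{s+1,h}f_{s,h}(\underline i)\neq0$ if and only if $i_h=s$ and either $h=d$ or $i_{h+1}>s+2$. (iv) $f_{s+1,h+1}f_{s,h}(\underline i)=f_{s,h+1}f_{s+1,h}(\underline i)=f_{s+1,h}f_{s,h+1}(\underline i)=0$, and $f_{s,h}f_{s+1,h+1}(\underline i)\neq0$ if and only if $i_h=s$, $i_{h+1}=s+1$ and either $h+1=d$ or $i_{h+2}>s+2$.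
   Context: $I(d,n)$ is the set of $d$-element subsets of $\{1,\dots,n\}$ written as increasing sequences. For $1\le h\le d$ and $h\le s<n-d+h$, the root operator $f_{s,h}$ on $I(d,n)\sqcup\{0\}$ ($0$ a formal symbol) is defined by $f_{s,h}(0)=0$ and $f_{s,h}(i_1\cdots i_d)=i_1\cdots i_{h-1}(s+1)i_{h+1}\cdots i_d$ if $i_h=s$ and either $h=d$ or $i_{h+1}\ge s+2$, and $0$ otherwise. *)

(* Defs.v *)
From mathcomp Require Import all_boot.
Set Implicit Arguments. Unset Strict Implicit. Unset Printing Implicit Defensive.

(* I(d,n): d-element subsets of {1,...,n}, written as strictly increasing
   sequences i_1 ... i_d (stored as a seq nat, 0-based storage). *)
Definition in_I (d n : nat) (i : seq nat) : bool :=
  [&& size i == d, sorted ltn i & all (fun x => 0 < x <= n) i].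

Definition entry (i : seq nat) (h : nat) : nat := nth 0 i h.-1.

(* I(d,n) ⊔ {0} is modelled by option (seq nat), with None playing 0. *)

Definition admissible (d n s h : nat) : bool :=
  [&& 0 < h, h <= d, h <= s & s + d < n + h].

Definition rootop (d s h : nat) (x : option (seq nat)) : option (seq nat) :=
  match x with
  | None => None
  | Some i =>
      if (entry i h == s) && ((h == d) || (s + 2 <= entry i h.+1))
      then Some (set_nth 0 i h.-1 s.+1)
      else None
  end.

(* Main.v *)
Require Import Defs.
From mathcomp Require Import all_boot zify.
Lemma entry_set i m v j : entry (set_nth 0 i m v) j = if j.-1 == m then v else entry i j.
Proof. by rewrite /entry nth_set_nth. Qed.
Lemma sorted_entry d n i j : in_I d n i -> 0 < j -> j < d -> entry i j < entry i j.+1.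
Proof.
case/and3P=> /eqP sz srt _ hj jd; rewrite /entry.
have := sorted_ltn_nth ltn_trans 0 srt. move=> H.
have -> : j = j.-1.+1 by lia.
rewrite -pred_Sn; apply: H => /=.
all: rewrite ?unfold_in /=; lia.
Qed.

Ltac crunch := rewrite /rootop; repeat (case: ifP => /=; rewrite ?entry_set => ?);
  try done;
  repeat (match goal with H : context[if _ then _ else _] |- _ => revert H end);
  repeat (case: ifP => ?); intros.

Ltac fin := try done; try (exfalso; lia);
  try (split; intros; try (exfalso; match goal with H : None <> None |- _ => by apply H end);
    repeat match goal with H : and3 _ _ _ |- _ => destruct H end; try done; try (constructor; lia); lia).

Lemma part1 d n i : in_I d n i -> (forall s t h k, admissible d n s h -> admissible d n t k ->
     (h.+1 < k) || (k.+1 < h) ||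
     (((h == k.+1) || (k == h.+1)) && ((s.+1 < t) || (t.+1 < s))) ->
     rootop d s h (rootop d t k (Some i)) = rootop d t k (rootop d s h (Some i))).
Proof.
move=> Hi s t h k; rewrite /admissible => A1 A2 C.
have Sh := @sorted_entry d n i h Hi.
have Sk := @sorted_entry d n i k Hi.
have E : (k == h.+1) || (h == k.+1) || (h.+1 < k) || (k.+1 < h) by lia.
case/orP: E => [/orP [/orP [/eqP E|/eqP E]|E] | E]; try subst k; try subst h; crunch.
all: try (exfalso; lia).
all: try (rewrite set_set_nth; case: ifP => ?; [exfalso; lia| done]).
Qed.

Theorem proposition2p13 (d n : nat) (i : seq nat) :
  1 <= d -> d < n -> in_I d n i ->
  (* (i) *)
  (forall s t h k, admissible d n s h -> admissible d n t k ->
     (h.+1 < k) || (k.+1 < h) ||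
     (((h == k.+1) || (k == h.+1)) && ((s.+1 < t) || (t.+1 < s))) ->
     rootop d s h (rootop d t k (Some i)) = rootop d t k (rootop d s h (Some i)))
  /\
  (* (ii) *)
  (forall s t h, admissible d n s h -> admissible d n t h ->
     (s.+1 < t) || (t.+1 < s) || (s == t) ->
     rootop d s h (rootop d t h (Some i)) = None /\
     rootop d t h (rootop d s h (Some i)) = None)
  /\
  (* (iii) *)
  (forall s h, admissible d n s h -> admissible d n s.+1 h ->
     rootop d s h (rootop d s.+1 h (Some i)) = None /\
     (rootop d s.+1 h (rootop d s h (Some i)) <> None <->
        entry i h = s /\ (h = d \/ s + 2 < entry i h.+1)))
  /\
  (* (iv) *)
  (forall s h,
     (admissible d n s.+1 h.+1 -> admissible d n s h ->
        rootop d s.+1 h.+1 (rootop d s h (Some i)) = None) /\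
     (admissible d n s h.+1 -> admissible d n s.+1 h ->
        rootop d s h.+1 (rootop d s.+1 h (Some i)) = None) /\
     (admissible d n s.+1 h -> admissible d n s h.+1 ->
        rootop d s.+1 h (rootop d s h.+1 (Some i)) = None) /\
     (admissible d n s h -> admissible d n s.+1 h.+1 ->
        (rootop d s h (rootop d s.+1 h.+1 (Some i)) <> None <->
           [/\ entry i h = s, entry i h.+1 = s.+1 &
               (h.+1 = d \/ s + 2 < entry i h.+2)]))).
Proof.
move=> d1 dn Hi; split; first exact: part1.
split.
  move=> s t h; rewrite /admissible => A1 A2 C; split; crunch; fin.
split.
  move=> s h; rewrite /admissible => A1 A2; split; crunch; fin.
move=> s h; split; [|split; [|split]]; rewrite /admissible => A1 A2; crunch; fin.
Qed.
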